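(* Let $n,m,\mu$ be positive integers and let $\Xi=\{\hat\xi\in\mathbb{R}^{n+m}: P\hat\xi\ge p\}$ be a bounded polytope (with given $P\in\mathbb{R}^{l\times(n+m)}$, $p\in\mathbb{R}^l$) such that for every $\hat\xi=(\hat a_1,\dots,\hat a_n,\hat b_1,\dots,\hat b_m)^T\in\Xi$ one has $\hat b_1\neq0$ and all roots of $\hat b(\lambda)=\hat b_1+\hat b_2\lambda+\dots+\hat b_m\lambda^{m-1}$ lie outside the closed unit disk. Let $y=(y_t)$ and $u=(u_t)$ be real sequences with $y_k=0$ for $k\le -n$ and $u_k=0$ for $k<0$ (the initial values $y_{1-n},\dots,y_0$ being arbitrary). Let $\hat\theta=(\hat\xi^T,\hat\delta^w,\hat\delta^y,\hat\delta^u)^T$ with $\hat\xi\in\Xi$, $\hat\delta^w\ge0$, $\hat\delta^y\ge0$, $\hat\delta^u\ge0$, and suppose that for all $t\ge0$ $$\big|\hat a(q^{-1})y_{t+1}-\hat b(q^{-1})u_t\big|\le \hat\delta^w+\hat\delta^y\,|y_{t+1-\mu}^{t}|+\hat\delta^u\,|u_{t+1-\mu}^{t}|.$$ Then the data $(y,u)$ are consistent with the plant model with parameter vector $\hat\theta$: namely, $\hat\xi\in\Xi$ and there exist a real sequence $w$ with $|w_t|\le1$ for all $t$ and strictly causal (linear time-varying) operators $\Delta^1,\Delta^2$ on real sequences with memory $\mu$, satisfying $|\Delta^1(y)_t|\le|y_{t-\mu}^{t-1}|$ and $|\Delta^2(u)_t|\le|u_{t-\mu}^{t-1}|$ for all $t$,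 such that for all $t\ge0$ $$\hat a(q^{-1})y_{t+1}=\hat b(q^{-1})u_t+\hat\delta^w w_{t+1}+\hat\delta^y\Delta^1(y)_{t+1}+\hat\delta^u\Delta^2(u)_{t+1}.$$
   Context: $q^{-1}$ is the backward shift operator, $q^{-1}y_t=y_{t-1}$. For $\hat\xi=(\hat a_1,\dots,\hat a_n,\hat b_1,\dots,\hat b_m)^T$, $\hat a(q^{-1})=1+\hat a_1q^{-1}+\dots+\hat a_nq^{-n}$ and $\hat b(q^{-1})=\hat b_1+\hat b_2q^{-1}+\dots+\hat b_mq^{1-m}$. For a sequence $x$, $x_s^t=(x_s,\dots,x_t)$ and $|x_s^t|=\max_{s\le k\le t}|x_k|$. An operator $\Delta$ on real sequences is strictly causal with memory $\mu$ if $(\Delta x)_t$ depends only on $x_{t-\mu},\dots,x_{t-1}$. *)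

(* Defs.v *)
From Stdlib Require Import Reals ZArith Lia.
From Coquelicot Require Import Coquelicot.
Open Scope R_scope.

Fixpoint rsum (f : nat -> R) (k : nat) : R :=
  match k with O => 0 | S k' => rsum f k' + f k' end.

Fixpoint csum (f : nat -> C) (k : nat) : C :=
  match k with O => RtoC 0 | S k' => Cplus (csum f k') (f k') end.

Fixpoint maxabs (x : Z -> R) (s : Z) (len : nat) : R :=
  match len with
  | O => 0
  | S k => Rmax (Rabs (x (s + Z.of_nat k)%Z)) (maxabs x s k)
  end.

(* |x_s^t| = max_{s <= k <= t} |x_k| *)
Definition winmax (x : Z -> R) (s t : Z) : R :=
  maxabs x s (Z.to_nat (t - s + 1)).

(* A parameter vector xi : nat -> R of length n+m, 0-based:
   hat a_i = xi (i-1) for i = 1..n,  hat b_j = xi (n + j - 1) for j = 1..m. *)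
Definition coef_a (n : nat) (xi : nat -> R) (i : nat) : R := xi (i - 1)%nat.
Definition coef_b (n : nat) (xi : nat -> R) (j : nat) : R := xi (n + j - 1)%nat.

Definition inXi (n m l : nat) (P : nat -> nat -> R) (p : nat -> R)
    (xi : nat -> R) : Prop :=
  forall r, (r < l)%nat -> rsum (fun c => P r c * xi c) (n + m) >= p r.

Definition Xi_bounded (n m l : nat) (P : nat -> nat -> R) (p : nat -> R) : Prop :=
  exists M : R, forall xi, inXi n m l P p xi ->
    forall c, (c < n + m)%nat -> Rabs (xi c) <= M.

Definition bpoly (n m : nat) (xi : nat -> R) (lam : C) : C :=
  csum (fun k => Cmult (RtoC (coef_b n xi (S k))) (Cpow lam k)) m.

(* hat a(q^{-1}) y_{t+1} = y_{t+1} + sum_{i=1}^n a_i y_{t+1-i} *)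
Definition apply_a (n : nat) (xi : nat -> R) (y : Z -> R) (t : Z) : R :=
  y (t + 1)%Z + rsum (fun k => coef_a n xi (S k) * y (t + 1 - Z.of_nat (S k))%Z) n.

(* hat b(q^{-1}) u_t = sum_{j=1}^m b_j u_{t+1-j} *)
Definition apply_b (n m : nat) (xi : nat -> R) (u : Z -> R) (t : Z) : R :=
  rsum (fun k => coef_b n xi (S k) * u (t - Z.of_nat k)%Z) m.

Definition linear_op (D : (Z -> R) -> (Z -> R)) : Prop :=
  (forall x x' t, D (fun k => x k + x' k) t = D x t + D x' t) /\
  (forall c x t, D (fun k => c * x k) t = c * D x t).

Definition strictly_causal_mem (mu : nat) (D : (Z -> R) -> (Z -> R)) : Prop :=
  forall x x' t,
    (forall k : nat, (1 <= k <= mu)%nat -> x (t - Z.of_nat k)%Z = x' (t - Z.of_nat k)%Z) ->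
    D x t = D x' t.

(* Main.v *)
Require Import Defs.
From Stdlib Require Import Reals ZArith Lia Lra Psatz.
From Coquelicot Require Import Coquelicot.
Open Scope R_scope.


Fixpoint argm (x : Z -> R) (s : Z) (len : nat) : Z :=
  match len with
  | O => s
  | S k => if Rle_dec (Rabs (x (s + Z.of_nat k)%Z)) (maxabs x s k)
           then argm x s k else (s + Z.of_nat k)%Z
  end.

Lemma argm_spec x s len : len = O \/
  ((s <= argm x s len)%Z /\ (argm x s len < s + Z.of_nat len)%Z /\
   Rabs (x (argm x s len)) = maxabs x s len).
Proof.
  induction len as [|k IH]; [now left|right].
  simpl. unfold Rmax. destruct (Rle_dec (Rabs (x (s + Z.of_nat k)%Z)) (maxabs x s k)) as [h|h].
  - destruct IH as [->|[h1 [h2 h3]]].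
    + simpl in *. split; [lia|split;[lia|]].
      replace (s + 0)%Z with s in h by lia.
      pose proof (Rabs_pos (x s)). lra.
    + split; [lia|split;[lia|exact h3]].
  - split; [lia|split;[lia|reflexivity]].
Qed.

Definition sgnr (r : R) : R := if Rle_dec 0 r then 1 else -1.
Lemma sgnr_abs r : sgnr r * r = Rabs r.
Proof. unfold sgnr. destruct (Rle_dec 0 r).
  rewrite Rabs_right; lra. rewrite Rabs_left; lra. Qed.


Lemma win_spec (mu : nat) (Hmu : (0 < mu)%nat) (x : Z -> R) (s : Z) :
  let k := argm x (s - Z.of_nat mu) (Z.to_nat (s - 1 - (s - Z.of_nat mu) + 1)) in
  (s - Z.of_nat mu <= k <= s - 1)%Z /\
  Rabs (x k) = winmax x (s - Z.of_nat mu) (s - 1).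
Proof.
  intro k. unfold winmax, k.
  replace (Z.to_nat (s - 1 - (s - Z.of_nat mu) + 1)) with mu by lia.
  destruct (argm_spec x (s - Z.of_nat mu) mu) as [h|[h1 [h2 h3]]]; [lia|].
  split; [lia|exact h3].
Qed.

Theorem proposition1
  (n m mu l : nat) (P : nat -> nat -> R) (p : nat -> R)
  (Hn : (0 < n)%nat) (Hm : (0 < m)%nat) (Hmu : (0 < mu)%nat)
  (Hbdd : Xi_bounded n m l P p)
  (Hroots : forall xi, inXi n m l P p xi ->
      coef_b n xi 1 <> 0 /\
      (forall lam : C, Cmod lam <= 1 -> bpoly n m xi lam <> RtoC 0))
  (y u : Z -> R)
  (Hy0 : forall k : Z, (k <= - Z.of_nat n)%Z -> y k = 0)
  (Hu0 : forall k : Z, (k < 0)%Z -> u k = 0)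
  (xi : nat -> R) (dw dy du : R)
  (Hxi : inXi n m l P p xi)
  (Hdw : 0 <= dw) (Hdy : 0 <= dy) (Hdu : 0 <= du)
  (Hineq : forall t : Z, (0 <= t)%Z ->
      Rabs (apply_a n xi y t - apply_b n m xi u t)
        <= dw + dy * winmax y (t + 1 - Z.of_nat mu) t
              + du * winmax u (t + 1 - Z.of_nat mu) t) :
  inXi n m l P p xi /\
  exists (w : Z -> R) (D1 D2 : (Z -> R) -> (Z -> R)),
    (forall t, Rabs (w t) <= 1) /\
    linear_op D1 /\ strictly_causal_mem mu D1 /\
    linear_op D2 /\ strictly_causal_mem mu D2 /\
    (forall t, Rabs (D1 y t) <= winmax y (t - Z.of_nat mu) (t - 1)) /\
    (forall t, Rabs (D2 u t) <= winmax u (t - Z.of_nat mu) (t - 1)) /\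
    (forall t : Z, (0 <= t)%Z ->
      apply_a n xi y t =
        apply_b n m xi u t + dw * w (t + 1)%Z + dy * D1 y (t + 1)%Z
        + du * D2 u (t + 1)%Z).
Proof.
  set (e := fun t => apply_a n xi y t - apply_b n m xi u t).
  set (B := fun t => dw + dy * winmax y (t + 1 - Z.of_nat mu) t
              + du * winmax u (t + 1 - Z.of_nat mu) t).
  set (lam := fun s : Z => if Z_le_dec 0 (s - 1) then
     (if Req_EM_T (B (s - 1)%Z) 0 then 0 else e (s - 1)%Z / B (s - 1)%Z) else 0).
  set (ky := fun s => argm y (s - Z.of_nat mu) (Z.to_nat (s - 1 - (s - Z.of_nat mu) + 1))).
  set (ku := fun s => argm u (s - Z.of_nat mu) (Z.to_nat (s - 1 - (s - Z.of_nat mu) + 1))).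
  assert (Hlam : forall s, Rabs (lam s) <= 1).
  { intro s. unfold lam. destruct (Z_le_dec 0 (s-1)) as [h|h].
    2: rewrite Rabs_R0; lra.
    destruct (Req_EM_T (B (s-1)%Z) 0) as [hb|hb]. rewrite Rabs_R0; lra.
    pose proof (Hineq _ h) as hi. fold (e (s-1)%Z) in hi. fold (B (s-1)%Z) in hi.
    assert (0 < B (s-1)%Z) by (pose proof (Rabs_pos (e (s-1)%Z)); lra).
    unfold Rdiv. rewrite Rabs_mult, Rabs_inv, (Rabs_right (B _)) by lra.
    apply (Rmult_le_reg_r (B (s-1)%Z)); [lra|].
    rewrite Rmult_assoc, Rinv_l by lra. lra. }
  split; [exact Hxi|].
  exists lam,
    (fun x s => lam s * sgnr (y (ky s)) * x (ky s)),
    (fun x s => lam s * sgnr (u (ku s)) * x (ku s)).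
  split; [exact Hlam|].
  split; [split; intros; ring|].
  split.
  { intros x x' t H. destruct (win_spec mu Hmu y t) as [h _]. fold (ky t) in h.
    assert (HH : x (ky t) = x' (ky t)).
    { replace (ky t) with (t - Z.of_nat (Z.to_nat (t - ky t)))%Z by lia. apply H; lia. }
    cbv beta. rewrite HH. reflexivity. }
  split; [split; intros; ring|].
  split.
  { intros x x' t H. destruct (win_spec mu Hmu u t) as [h _]. fold (ku t) in h.
    assert (HH : x (ku t) = x' (ku t)).
    { replace (ku t) with (t - Z.of_nat (Z.to_nat (t - ku t)))%Z by lia. apply H; lia. }
    cbv beta. rewrite HH. reflexivity. }
  assert (HY : forall t, lam t * sgnr (y (ky t)) * y (ky t) = lam t * winmax y (t - Z.of_nat mu) (t - 1)).
  { intro t. destruct (win_spec mu Hmu y t) as [_ h]. fold (ky t) in h.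
    rewrite Rmult_assoc, sgnr_abs, h. reflexivity. }
  assert (HU : forall t, lam t * sgnr (u (ku t)) * u (ku t) = lam t * winmax u (t - Z.of_nat mu) (t - 1)).
  { intro t. destruct (win_spec mu Hmu u t) as [_ h]. fold (ku t) in h.
    rewrite Rmult_assoc, sgnr_abs, h. reflexivity. }
  assert (Hpos : forall x t, 0 <= winmax x (t - Z.of_nat mu) (t - 1)).
  { intros x t. destruct (win_spec mu Hmu x t) as [_ h]. rewrite <- h. apply Rabs_pos. }
  split.
  { intro t. rewrite HY, Rabs_mult, (Rabs_right (winmax _ _ _)) by (apply Rle_ge, Hpos).
    pose proof (Hlam t). pose proof (Hpos y t). pose proof (Rabs_pos (lam t)). nra. }
  split.
  { intro t. rewrite HU, Rabs_mult, (Rabs_right (winmax _ _ _)) by (apply Rle_ge, Hpos).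
    pose proof (Hlam t). pose proof (Hpos u t). pose proof (Rabs_pos (lam t)). nra. }
  intros t ht. rewrite HY, HU.
  replace (t + 1 - 1)%Z with t by lia.
  assert (E : apply_a n xi y t = apply_b n m xi u t + e t) by (unfold e; ring).
  rewrite E.
  assert (Hl : lam (t + 1)%Z * B t = e t).
  { unfold lam. replace (t + 1 - 1)%Z with t by lia.
    destruct (Z_le_dec 0 t) as [_|h]; [|lia].
    destruct (Req_EM_T (B t) 0) as [hb|hb].
    - pose proof (Hineq _ ht) as hi. fold (e t) in hi. fold (B t) in hi.
      rewrite hb in hi. pose proof (Rabs_pos (e t)).
      assert (Rabs (e t) = 0) by lra.
      destruct (Req_dec (e t) 0) as [z|z]; [rewrite z; ring|].
      exfalso. apply z. apply Rabs_eq_0; auto.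
    - field. exact hb. }
  rewrite <- Hl. unfold B.
  replace (t + 1 - Z.of_nat mu)%Z with ((t + 1) - Z.of_nat mu)%Z by lia.
  ring.
Qed.
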